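(* If $Y^*\in\mathcal L^1(\mathcal Q)$, then $$\sup_{\tau\in\mathcal T}\inf_{\mathrm Q\in\overline{\mathcal Q}}\mathbb E_{\mathrm Q}[Y_\tau]=\sup_{\tau\in\mathcal T}\inf_{\mathrm Q\in\mathcal Q}\mathbb E_{\mathrm Q}[Y_\tau]=\sup_{\tau\in\mathcal T}\inf_{\mathrm Q\in co(\mathcal Q)}\mathbb E_{\mathrm Q}[Y_\tau].$$
   Context: Let $(\Omega,\mathcal F,(\mathcal F_t)_{0\le t\le T},\mathrm P)$ be a filtered probability space ($0<T<\infty$) with right-continuous filtration, $\mathcal F=\mathcal F_T$, $\mathcal F_0$ trivial and containing all $\mathrm P$-null sets. $\mathcal T$ is the set of stopping times $\tau\le T$. $\mathcal Q$ is a nonempty set of probability measures on $\mathcal F$, each absolutely continuous w.r.t. $\mathrm P$, $co(\mathcal Q)$ its convex hull. $\mathcal L^1(\mathcal Q)$ is the set of random variables $X$ with $\sup_{\mathrm Q\in\mathcal Q}\mathbb E_{\mathrm Q}[|X|]<\infty$. $Y=(Y_t)_{0\le t\le T}$ is a right-continuous adapted process with bounded paths, quasi left-uppersemicontinuous w.r.t. $\mathrm P$, and $Y^*:=\sup_{t\in[0,T]}|Y_t|$. $\mathcal X$ is the set of random variables $X$ with $|X|\le C(Y^*+1)$ $\mathrm P$-a.s. for some $C>0$; $\rho_{\mathcal Q}(X)=\sup_{\mathrm Q\in\mathcal Q}\mathbb E_{\mathrm Q}[X]$ for $X\in\mathcal X$. $\overline{\mathcal Q}$ is the set of probability measures $\mathrm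 Q$ on $\mathcal F$ such that every $X\in\mathcal X$ is $\mathrm Q$-integrable and $\mathbb E_{\mathrm Q}[X]\le\rho_{\mathcal Q}(X)$ for all $X\in\mathcal X$. *)

(* Defs.v *)
From HB Require Import structures.
From mathcomp Require Import all_boot all_order all_algebra.
From mathcomp Require Import all_classical all_reals all_analysis.
From mathcomp Require Import measurable_realfun.
Set Implicit Arguments. Unset Strict Implicit. Unset Printing Implicit Defensive.
Import Order.TTheory GRing.Theory Num.Theory.
Import numFieldNormedType.Exports.
Local Open Scope classical_set_scope.
Local Open Scope ring_scope.
Local Open Scope ereal_scope.

Section Defs.
Context (d : measure_display) (Om : measurableType d) (R : realType).

Definition usual_filtration (P : probability Om R) (Tend : R)
    (F : R -> set (set Om)) : Prop :=
  [/\ (forall t, (0 <= t <= Tend)%R -> sigma_algebra setT (F t)),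
      (forall s t, (0 <= s)%R -> (s <= t)%R -> (t <= Tend)%R -> F s `<=` F t),
      (forall A, F Tend A <-> measurable A) &
   [/\
      (forall t, (0 <= t)%R -> (t < Tend)%R ->
         forall A, F t A <-> (forall s, (t < s)%R -> (s <= Tend)%R -> F s A)),
      (forall A, P.-negligible A -> F 0%R A) &
      (forall A, F 0%R A -> P A = 0 \/ P A = 1)]].

Definition stopping_time (Tend : R) (F : R -> set (set Om)) (tau : Om -> R) :=
  (forall x, (0 <= tau x <= Tend)%R) /\
  (forall t, (0 <= t <= Tend)%R -> F t [set x | (tau x <= t)%R]).

Definition stopped (Y : R -> Om -> R) (tau : Om -> R) : Om -> R :=
  fun x => Y (tau x) x.

Definition adapted (Tend : R) (F : R -> set (set Om)) (Y : R -> Om -> R) :=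
  forall t, (0 <= t <= Tend)%R -> forall B : set R, measurable B ->
    F t (Y t @^-1` B).

Definition right_continuous_paths (Tend : R) (Y : R -> Om -> R) :=
  forall x t, (0 <= t)%R -> (t < Tend)%R -> Y^~ x @ t^'+ --> Y t x.

Definition bounded_paths (Tend : R) (Y : R -> Om -> R) :=
  forall x, exists M : R, forall t, (0 <= t <= Tend)%R -> (`|Y t x| <= M)%R.

Definition quasi_left_usc (P : probability Om R) (Tend : R)
    (F : R -> set (set Om)) (Y : R -> Om -> R) :=
  forall (taus : nat -> Om -> R) (tau : Om -> R),
    (forall n, stopping_time Tend F (taus n)) -> stopping_time Tend F tau ->
    (forall x, {homo (fun n => taus n x) : m n / (m <= n)%N >-> (m <= n)%R}) ->
    (forall x, (fun n => taus n x) @ \oo --> tau x) ->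
    {ae P, forall x, limn_esup (fun n => (stopped Y (taus n) x)%:E)
                      <= (stopped Y tau x)%:E}.

Definition Ystar (Tend : R) (Y : R -> Om -> R) : Om -> \bar R :=
  fun x => ereal_sup [set (`|Y t x|)%:E | t in `[0%R, Tend]].

Definition expect (Q : probability Om R) (X : Om -> R) : \bar R :=
  \int[Q]_x (X x)%:E.

Definition in_L1 (Qs : set (probability Om R)) (X : Om -> \bar R) :=
  measurable_fun setT X /\
  ereal_sup [set \int[Q]_x `|X x| | Q in Qs] < +oo.

Definition conv_hull (Qs : set (probability Om R)) : set (probability Om R) :=
  [set Q : probability Om R | exists (n : nat) (w : 'I_n -> R) (Qi : 'I_n -> probability Om R),
     [/\ (forall i, 0 <= w i)%R, (\sum_(i < n) w i)%R = 1%R,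
         (forall i, Qs (Qi i)) &
         forall A, measurable A -> Q A = \sum_(i < n) (w i)%:E * Qi i A]].

Definition Xspace (P : probability Om R) (Tend : R) (Y : R -> Om -> R) :
    set (Om -> R) :=
  [set X : Om -> R | measurable_fun setT X /\
     exists C : R, (0 < C)%R /\
       {ae P, forall x, (`|X x|)%:E <= C%:E * (Ystar Tend Y x + 1)}].

Definition rho (Qs : set (probability Om R)) (X : Om -> R) : \bar R :=
  ereal_sup [set expect Q X | Q in Qs].

Definition Qbar (P : probability Om R) (Tend : R) (Y : R -> Om -> R)
    (Qs : set (probability Om R)) : set (probability Om R) :=
  [set Q : probability Om R | forall X, Xspace P Tend Y X ->
     Q.-integrable setT (EFin \o X) /\ expect Q X <= rho Qs X].

Definition robust_value (Tend : R) (F : R -> set (set Om)) (Y : R -> Om -> R)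
    (Qs : set (probability Om R)) : \bar R :=
  ereal_sup [set ereal_inf [set expect Q (stopped Y tau) | Q in Qs]
            | tau in [set tau | stopping_time Tend F tau]].

End Defs.

(* Main.v *)
Require Import Defs.
From HB Require Import structures.
From mathcomp Require Import all_boot all_order all_algebra.
From mathcomp Require Import all_classical all_reals all_analysis.
From mathcomp Require Import measurable_realfun.
Import Order.TTheory GRing.Theory Num.Theory.
Import numFieldNormedType.Exports.
Local Open Scope classical_set_scope.
Local Open Scope ring_scope.
Local Open Scope ereal_scope.


Section Meas.
Context (d : measure_display) (Om : measurableType d) (R : realType).
Context (P : probability Om R) (Tend : R) (F : R -> set (set Om)).
Hypothesis T0 : (0 < Tend)%R.
Hypothesis HF : usual_filtration P Tend F.

Lemma Ft_meas t A : (0 <= t <= Tend)%R -> F t A -> measurable A.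
Proof.
case: HF => _ mono Fm _ /andP[t0 tT] FA.
by apply/Fm; exact: (mono t Tend t0 tT (lexx _) A FA).
Qed.

Variable tau : Om -> R.
Hypothesis Htau : stopping_time Tend F tau.

Lemma tau_le_meas s : measurable [set x | (tau x <= s)%R].
Proof.
case: Htau => rg st.
have [s0|s0] := ltP s 0%R.
  suff -> : [set x | (tau x <= s)%R] = set0 by [].
  apply/seteqP; split => x //= H; have /andP[+ _] := rg x.
  by move=> h; have := le_lt_trans (le_trans h H) s0; rewrite ltxx.
have [sT|sT] := ltP Tend s.
  suff -> : [set x | (tau x <= s)%R] = setT by [].
  apply/seteqP; split => x //= _; have /andP[_ +] := rg x.
  by move=> h; apply: (le_trans h); exact: ltW.
by apply: (@Ft_meas s); [rewrite s0 sT|apply: st; rewrite s0 sT].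
Qed.

End Meas.

Local Close Scope ereal_scope.

Section Meas2.
Context (d : measure_display) (Om : measurableType d) (R : realType).
Context (P : probability Om R) (Tend : R) (F : R -> set (set Om)).
Hypothesis T0 : (0 < Tend)%R.
Hypothesis HF : usual_filtration P Tend F.
Variable tau : Om -> R.
Hypothesis Htau : stopping_time Tend F tau.

Definition hh (n : nat) : R := Tend / n.+1%:R.
Definition cc n x : int := Num.ceil (tau x / hh n).
Definition taun n x : R := (cc n x)%:~R * hh n.

Lemma hh_gt0 n : 0 < hh n.
Proof. by rewrite /hh divr_gt0. Qed.

Lemma tau_rg x : 0 <= tau x <= Tend.
Proof. by case: Htau. Qed.

Lemma cc_ge0 n x : 0 <= cc n x.
Proof.
rewrite /cc ceil_ge0; apply: (lt_le_trans (y := 0)); first by rewrite ltrN10.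
by rewrite divr_ge0 // ?(ltW (hh_gt0 n)) //; case/andP: (tau_rg x).
Qed.

Lemma cc_le n x : cc n x <= (n.+1)%:Z.
Proof.
rewrite /cc ceil_le_int_tmp ler_pdivrMr ?hh_gt0 // /hh.
rewrite -[((n.+1)%:Z)%:~R]/((n.+1)%:R : R).
by rewrite mulrC divfK ?pnatr_eq0 //; case/andP: (tau_rg x).
Qed.

Lemma taun_ge n x : tau x <= taun n x.
Proof. by rewrite /taun -ler_pdivrMr ?hh_gt0 // ceil_ge. Qed.

Lemma taun_lt n x : taun n x < tau x + hh n.
Proof.
have := gt_pred_ceil (tau x / hh n); rewrite -/(cc n x).
rewrite ltr_pdivlMr ?hh_gt0 // intrB mulrBl mul1r /taun ltrBlDr.
by [].
Qed.

Lemma taun_le n x : taun n x <= Tend.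
Proof.
rewrite /taun /hh mulrA ler_pdivrMr ?ltr0Sn // mulrC ler_pM2l //.
have := cc_le n x => h.
by rewrite -[(n.+1)%:R]/(((n.+1)%:Z)%:~R : R) ler_int.
Qed.


Lemma cc_set n (k : int) : [set x | cc n x = k] =
  [set x | tau x <= k%:~R * hh n] `\` [set x | tau x <= (k%:~R - 1) * hh n].
Proof.
apply/seteqP; split=> x /=.
  move=> <-; split; first exact: taun_ge.
  move=> H; have := taun_lt n x; rewrite /taun.
  by rewrite mulrBl mul1r lerBrDr in H; rewrite ltNge H.
move=> [h1 h2]; apply/eqP; rewrite /cc ceil_eq; apply/andP; split.
  by rewrite ltr_pdivlMr ?hh_gt0 // intrB ltNge; apply/negP.
by rewrite ler_pdivrMr ?hh_gt0.
Qed.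

Lemma kh_le k n : (k <= n.+1)%N -> k%:R * hh n <= Tend.
Proof.
move=> kn; rewrite /hh mulrA ler_pdivrMr ?ltr0Sn // mulrC ler_pM2l //.
by rewrite ler_nat.
Qed.

Variable Y : R -> Om -> R.

Lemma fn_meas (HY : adapted Tend F Y) n :
  measurable_fun setT (fun x => Y (taun n x) x).
Proof.
move=> _ B mB; rewrite setTI.
have -> : (fun x => Y (taun n x) x) @^-1` B =
  \bigcup_(k in [set k | (k <= n.+1)%N])
     ([set x | cc n x = k%:Z] `&` (Y (k%:R * hh n) @^-1` B)).
  apply/seteqP; split=> x /=.
    have := cc_ge0 n x; have := cc_le n x; rewrite /taun.
    case E: (cc n x) => [m|m] //; rewrite lez_nat => mn _.
    by move=> HB; exists m.
  by move=> [k _ [E HB]]; rewrite /taun E.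
apply: bigcup_measurable => k /= kle; apply: measurableI.
  by rewrite cc_set; apply: measurableD; exact: (@tau_le_meas _ _ _ _ _ _ HF _ Htau).
apply: (@Ft_meas _ _ _ P Tend F HF (k%:R * hh n)).
  by rewrite kh_le // andbT mulr_ge0 // ltW // hh_gt0.
apply: HY => //.
by rewrite kh_le // andbT mulr_ge0 // ltW // hh_gt0.
Qed.

Lemma taun_cvg x : (fun n => taun n x) @ \oo --> tau x.
Proof.
apply/cvgrPdist_lt => e e0.
have := near_infty_natSinv_lt (PosNum (divr_gt0 e0 T0)).
apply: filterS => n /= Hn.
rewrite distrC ger0_norm ?subr_ge0 ?taun_ge //.
rewrite ltrBlDl; apply: (lt_le_trans (taun_lt n x)); rewrite lerD2l.
rewrite /hh; apply: ltW.
move: Hn; rewrite /= -(ltr_pM2l T0) mulrCA divff ?gt_eqF // mulr1. by [].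
Qed.

Lemma fn_cvg (HR : right_continuous_paths Tend Y) x :
  (fun n => Y (taun n x) x) @ \oo --> Y (tau x) x.
Proof.
have [t0 tT'] := andP (tau_rg x).
have [tT|tT] := ltP (tau x) Tend.
  apply/cvgrPdist_lt => e e0.
  have H : \forall t \near (tau x)^'+, `|Y (tau x) x - Y t x| < e.
    by move/cvgrPdist_lt: (HR x (tau x) t0 tT); apply.
  rewrite near_withinE in H.
  have H3 : \forall n \near \oo, (tau x < taun n x ->
     `|Y (tau x) x - Y (taun n x) x| < e) := taun_cvg x _ H.
  apply: filterS H3 => n H2.
  have [eq|lt] := eqVneq (taun n x) (tau x).
    by rewrite eq subrr normr0.
  apply: H2; rewrite lt_def lt; exact: taun_ge.
have E n : taun n x = tau x.
  by apply/eqP; rewrite eq_le taun_ge andbT (le_trans (taun_le n x)).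
under eq_fun do rewrite E.
exact: cvg_cst.
Qed.

End Meas2.

Lemma stopped_meas d (Om : measurableType d) (R : realType)
  (P : probability Om R) (Tend : R) (F : R -> set (set Om)) (Y : R -> Om -> R)
  (tau : Om -> R) :
  (0 < Tend)%R -> usual_filtration P Tend F -> stopping_time Tend F tau ->
  adapted Tend F Y -> right_continuous_paths Tend Y ->
  measurable_fun setT (stopped Y tau).
Proof.
move=> T0 HF Htau HY HR.
rewrite /stopped.
apply: (@measurable_fun_cvg _ _ _ _ (fun n x => Y (@taun _ Om R Tend tau n x) x)).
  by move=> n; exact: (@fn_meas _ _ _ _ _ _ T0 HF _ Htau _ HY n).
by move=> x _; exact: (@fn_cvg _ _ _ _ _ T0 _ Htau _ HR x).
Qed.

Local Open Scope ereal_scope.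

Section Integ.
Context (d : measure_display) (Om : measurableType d) (R : realType).
Context (P : probability Om R) (Tend : R) (Qs : set (probability Om R)).
Context (Y : R -> Om -> R).
Hypothesis T0 : (0 < Tend)%R.
Hypothesis Hdom : forall Q, Qs Q -> Q `<< P.
Hypothesis HL1 : in_L1 Qs (Ystar Tend Y).

Lemma Ystar_ge t x : (0 <= t <= Tend)%R -> (`|Y t x|)%:E <= Ystar Tend Y x.
Proof.
move=> /andP[t0 tT]; apply: ereal_sup_ubound; exists t => //.
by rewrite /= in_itv /= t0 tT.
Qed.

Lemma Ystar_ge0 x : 0 <= Ystar Tend Y x.
Proof.
apply: le_trans (Ystar_ge 0%R x _); first by rewrite lee_fin.
by rewrite lexx ltW.
Qed.

Lemma Qs_sub_Qbar : Qs `<=` Qbar P Tend Y Qs.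
Proof.
move=> Q QQ X [mX [C [C0 hae]]]; split; last first.
  by apply: ereal_sup_ubound; exists Q.
have [mY Ysup] := HL1.
apply/integrableP; split; first exact/measurable_EFinP.
have intY : \int[Q]_x Ystar Tend Y x < +oo.
  apply: le_lt_trans Ysup.
  have -> : \int[Q]_x Ystar Tend Y x = \int[Q]_x `|Ystar Tend Y x|.
    by apply: eq_integral => x _; rewrite gee0_abs // Ystar_ge0.
  by apply: ereal_sup_ubound; exists Q.
apply: (@le_lt_trans _ _ (\int[Q]_x (C%:E * (Ystar Tend Y x + 1)))).
  apply: ae_ge0_le_integral => //.
  - apply: measurableT_comp; first exact: abse_measurable.
    exact/measurable_EFinP.
  - move=> x _; apply: mule_ge0; first by rewrite lee_fin ltW.
    by apply: adde_ge0; [exact: Ystar_ge0|exact: lee01].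
  - apply: measurable_funeM; apply: emeasurable_funD => //.
  - move: hae => [N [mN PN sub]]; exists N; split => //.
      have := Hdom _ QQ; move=> /(_ N) H.
      by apply/(measure0_null_setP _ mN); apply: H; apply/(measure0_null_setP _ mN).
    by move=> x /= Hx; apply: sub => /= Hx'; apply: Hx => _.
rewrite ge0_integralZl //; first last.
- by rewrite lee_fin ltW.
- by move=> x _; apply: adde_ge0; [exact: Ystar_ge0|exact: lee01].
- by apply: emeasurable_funD => //; exact: measurable_cst.
rewrite ge0_integralD //; first last.
- by move=> x _; exact: Ystar_ge0.
rewrite integral_cst // [X in (1 * X)%E](_ : _ = 1) ?mul1e; last exact: probability_setT.
rewrite ltey_eq; apply/orP; left; apply: fin_numM => //.
rewrite fin_numD; apply/andP; split => //.
by rewrite ge0_fin_numE // integral_ge0 // => x _; exact: Ystar_ge0.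
Qed.


Variable X : Om -> R.
Hypothesis mX : measurable_fun setT X.
Hypothesis hX : forall x, (`|X x|)%:E <= Ystar Tend Y x.

Lemma XS : Xspace P Tend Y X.
Proof.
split=> //; exists 1%R; split=> //; apply: aeW => x.
by rewrite mul1e; apply: le_trans (hX x) _; apply: leeDl; exact: lee01.
Qed.

Lemma XSN : Xspace P Tend Y (fun x => - X x)%R.
Proof.
split; first exact: measurable_funN.
exists 1%R; split=> //; apply: aeW => x.
by rewrite mul1e normrN; apply: le_trans (hX x) _; apply: leeDl; exact: lee01.
Qed.

Lemma expN Q : Qbar P Tend Y Qs Q ->
  expect Q (fun x => - X x)%R = - expect Q X.
Proof.
move=> HQ; have [iX _] := HQ _ XS; rewrite /expect.
under eq_integral do rewrite EFinN.
apply: integralN; apply: fin_num_adde_defl.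
by rewrite fin_numN; exact: (integrable_neg_fin_num _ iX).
Qed.

Lemma inf_Qbar : ereal_inf [set expect Q X | Q in Qbar P Tend Y Qs] =
  ereal_inf [set expect Q X | Q in Qs].
Proof.
apply/eqP; rewrite eq_le; apply/andP; split.
  by apply: ereal_inf_le_tmp; apply: image_subset; exact: Qs_sub_Qbar.
apply: le_ereal_inf_tmp => _ [Q HQ <-].
have [_ le] := HQ _ XSN; rewrite expN // in le.
rewrite -leeN2 (le_trans le) //.
rewrite /rho; apply: ge_ereal_sup => _ [Q' HQ' <-].
rewrite expN ?leeN2; last exact: Qs_sub_Qbar.
by apply: ereal_inf_lbound; exists Q'.
Qed.

End Integ.


Section Conv.
Context (d : measure_display) (Om : measurableType d) (R : realType).

Lemma conv_int (Q : probability Om R) n (w : 'I_n -> R)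
  (Qi : 'I_n -> probability Om R) (g : Om -> \bar R) :
  (forall i, 0 <= w i)%R ->
  (forall A, measurable A -> Q A = \sum_(i < n) (w i)%:E * Qi i A) ->
  measurable_fun setT g -> (forall x, 0 <= g x) ->
  \int[Q]_x g x = \sum_(i < n) (w i)%:E * \int[Qi i]_x g x.
Proof.
move=> w0 QA mg g0.
pose m_ : (measure Om R)^nat := fun k =>
  match insub k with
  | Some i => (mscale (NngNum (w0 i)) (Qi i) : measure Om R)
  | None => (mzero : measure Om R)
  end.
rewrite (@eq_measure_integral _ _ _ setT (msum m_ n)); last first.
  move=> A mA _; apply: eq_trans (QA A mA) _; rewrite /msum /=; apply: eq_bigr => i _.
  by rewrite /m_ valK.
rewrite ge0_integral_measure_sum //; apply: eq_bigr => i _.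
by rewrite /m_ valK ge0_integral_mscale.
Qed.


Lemma conv_expect (Q : probability Om R) n (w : 'I_n -> R)
  (Qi : 'I_n -> probability Om R) (f : Om -> R) :
  (forall i, 0 <= w i)%R ->
  (forall A, measurable A -> Q A = \sum_(i < n) (w i)%:E * Qi i A) ->
  measurable_fun setT f -> (forall i, (Qi i).-integrable setT (EFin \o f)) ->
  expect Q f = \sum_(i < n) (w i)%:E * expect (Qi i) f.
Proof.
move=> w0 QA mf intf.
have mf' : measurable_fun setT (EFin \o f) by exact/measurable_EFinP.
rewrite /expect integralE.
rewrite (@conv_int Q n w Qi _ w0 QA (measurable_funepos mf') (funepos_ge0 _)).
rewrite (@conv_int Q n w Qi _ w0 QA (measurable_funeneg mf') (funeneg_ge0 _)).
rewrite [RHS](eq_bigr (fun i => (w i)%:E * \int[Qi i]_x (EFin \o f)^\+ x -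
    (w i)%:E * \int[Qi i]_x (EFin \o f)^\- x)); last first.
  move=> i _; rewrite integralE muleBr //; apply: fin_num_adde_defl.
  by rewrite fin_numN; exact: (integrable_neg_fin_num _ (intf i)).
rewrite big_split /= fin_num_sumeN // => i _.
by rewrite fin_numM //; exact: (integrable_neg_fin_num _ (intf i)).
Qed.

Lemma inf_conv (Qs : set (probability Om R)) (f : Om -> R) :
  measurable_fun setT f ->
  (forall Q, Qs Q -> Q.-integrable setT (EFin \o f)) ->
  ereal_inf [set expect Q f | Q in conv_hull Qs] =
  ereal_inf [set expect Q f | Q in Qs].
Proof.
move=> mf intf.
apply/eqP; rewrite eq_le; apply/andP; split.
  apply: ereal_inf_le_tmp; apply: image_subset => Q QQ.
  exists 1%N, (fun _ => 1%R), (fun _ => Q); split => //.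
    by rewrite big_ord1.
  by move=> A mA; rewrite big_ord1 mul1e.
apply: le_ereal_inf_tmp => _ [Q [n [w [Qi [w0 w1 QQ QA]]]] <-].
rewrite (@conv_expect Q n w Qi f w0 QA mf (fun i => intf _ (QQ i))).
have mle i : ereal_inf [set expect Q f | Q in Qs] <= expect (Qi i) f.
  by apply: ereal_inf_lbound; exists (Qi i).
have fin i : expect (Qi i) f \is a fin_num.
  exact: (integrable_fin_num _ (intf _ (QQ i))).
move: mle; case: (ereal_inf _) => [r| |] mle.
- apply: (@le_trans _ _ (\sum_(i < n) (w i)%:E * r%:E)); last first.
    apply: lee_sum => i _; apply: lee_wpmul2l; [by rewrite lee_fin|exact: mle].
  rewrite (eq_bigr (fun i => (w i * r)%:E)) // sumEFin -mulr_suml w1 mul1r.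
  by [].
- case: n w Qi w0 w1 QQ QA mle fin => [|n] w Qi w0 w1 QQ QA mle fin.
    by move: w1; rewrite big_ord0 => /eqP; rewrite eq_sym oner_eq0.
  have := fin ord0; have := mle ord0; rewrite leye_eq => /eqP ->.
  by [].
- exact: leNye.
Qed.

End Conv.


Theorem proposition6p2 (d : measure_display) (Om : measurableType d)
  (R : realType) (P : probability Om R) (Tend : R) (F : R -> set (set Om))
  (Qs : set (probability Om R)) (Y : R -> Om -> R) :
  (0 < Tend)%R ->
  usual_filtration P Tend F ->
  Qs !=set0 ->
  (forall Q, Qs Q -> Q `<< P) ->
  right_continuous_paths Tend Y ->
  adapted Tend F Y ->
  bounded_paths Tend Y ->
  quasi_left_usc P Tend F Y ->
  in_L1 Qs (Ystar Tend Y) ->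
  robust_value Tend F Y (Qbar P Tend Y Qs) = robust_value Tend F Y Qs /\
  robust_value Tend F Y Qs = robust_value Tend F Y (conv_hull Qs).
Proof.
move=> T0 HF Qne Hdom HR HY Hb Hq HL1.
have key tau : stopping_time Tend F tau ->
  ereal_inf [set expect Q (stopped Y tau) | Q in Qbar P Tend Y Qs] =
  ereal_inf [set expect Q (stopped Y tau) | Q in Qs] /\
  ereal_inf [set expect Q (stopped Y tau) | Q in Qs] =
  ereal_inf [set expect Q (stopped Y tau) | Q in conv_hull Qs].
  move=> Htau.
  have mX := @stopped_meas _ _ _ _ _ _ Y tau T0 HF Htau HY HR.
  have hX x : (`|stopped Y tau x|)%:E <= Ystar Tend Y x.
    by apply: Ystar_ge; case: Htau => + _; apply.
  split; first exact: (@inf_Qbar _ _ _ P Tend Qs Y T0 Hdom HL1 _ mX hX).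
  symmetry; apply: inf_conv => // Q QQ.
  exact: (@Qs_sub_Qbar _ _ _ P Tend Qs Y T0 Hdom HL1 Q QQ _
            (@XS _ _ _ P Tend Y _ mX hX)).1.
split; rewrite /robust_value; congr ereal_sup; apply: eq_imagel => tau Htau;
  by case: (key tau Htau).
Qed.
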